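(* Assume Hypotheses (LD) and (LD0). Then for every $\delta_0>0$ there exists an open neighborhood $V_0$ of $M_0$ such that $$\lim_{\varepsilon\to0}\frac{\beta_{\delta_0}(\varepsilon)}{\inf_{x\in V_0}p^\varepsilon(x,M_0)}=0.$$
   Context: Setting. Let $M\subset\mathbb{R}^d$ be closed; all topological notions are relative to $M$. Let $F:M\to M$ be continuous with $\|F\|:=\sup_{x\in M}\|F(x)\|<\infty$. For $A\subset M$ and $\delta>0$, put $N^\delta(A)=\{x\in M:\inf_{y\in A}\|x-y\|<\delta\}$, and let $d(x,y)=\max_i|x_i-y_i|$. Let $\{X^\varepsilon\}_{\varepsilon>0}$ be a family of time-homogeneous Markov chains on $M$ with transition kernels $p^\varepsilon(x,\Gamma)$. Put $\beta_\delta(\varepsilon):=\sup_{x\in M}p^\varepsilon(x,M\setminus N^\delta(F(x)))$. Assume $M=M_0\cup M_1$ (disjoint), where $M_0$ is closed, $F(M_0)\subseteq M_0$, $F(M_1)\subseteq M_1$, and $p^\varepsilon(x,M_1)=0$ for all $\varepsilon>0$ and $x\in M_0$. Hypothesis (LD). There is $\rho:M\times M\to[0,+\infty]$ such that: (i) $\rho$ is continuous on $M_1\times M$; (ii) $\rho(x,y)=0$ iff $y=F(x)$; (iii) for every $\beta>0$, $\inf\{\rho(x,y):x,y\in M,\ d(F(x),y)>\beta\}>0$; (iv) lower bound: for every compact $K\subset M_1$, every open ball $U$ of $M$ and every $\eta>0$, there is $\varepsilon_0>0$ such that $\varepsilon\log p^\varepsilon(x,U)\ge-\inf_{y\in U}\rho(x,y)-\eta$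 for all $x\in K$ and $\varepsilon<\varepsilon_0$; (v) upper bound: for every closed $C\subset M$ and every $\eta>0$, there is $\varepsilon_0>0$ such that $\varepsilon\log p^\varepsilon(x,C)\le-\inf_{y\in C}\rho(x,y)+\eta$ for all $x\in M$ and $\varepsilon<\varepsilon_0$. Hypothesis (LD0). For every $c>0$ there is an open neighborhood $V_0$ of $M_0$ with $\liminf_{\varepsilon\to0}\inf_{x\in V_0}\varepsilon\log p^\varepsilon(x,M_0)\ge-c$. *)

(* Defs.v *)
From Stdlib Require Fin.
From Stdlib Require Import Reals Lra Classical List.
Open Scope R_scope.

Definition Rd (d : nat) := Fin.t d -> R.
Definition set (d : nat) := Rd d -> Prop.

Fixpoint sumF (n : nat) : (Fin.t n -> R) -> R :=
  match n with
  | O => fun _ => 0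
  | S m => fun f => f Fin.F1 + sumF m (fun i => f (Fin.FS i))
  end.

Fixpoint maxF (n : nat) : (Fin.t n -> R) -> R :=
  match n with
  | O => fun _ => 0
  | S m => fun f => Rmax (f Fin.F1) (maxF m (fun i => f (Fin.FS i)))
  end.

Definition enorm {d} (x : Rd d) : R := sqrt (sumF d (fun i => (x i) ^ 2)).
Definition dist {d} (x y : Rd d) : R := enorm (fun i => x i - y i).
Definition dmax {d} (x y : Rd d) : R := maxF d (fun i => Rabs (x i - y i)).

Definition open_set {d} (U : set d) : Prop :=
  forall x, U x -> exists r, 0 < r /\ forall y, dist x y < r -> U y.
Definition closed_set {d} (C : set d) : Prop :=
  forall x, (forall r, 0 < r -> exists y, C y /\ dist x y < r) -> C x.
Definition compact {d} (K : set d) : Prop :=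
  forall (I : Type) (U : I -> set d),
    (forall i, open_set (U i)) ->
    (forall x, K x -> exists i, U i x) ->
    exists l : list I, forall x, K x -> exists i, In i l /\ U i x.

Definition rel_open {d} (M U : set d) : Prop :=
  (forall x, U x -> M x) /\
  forall x, U x -> exists r, 0 < r /\ forall y, M y -> dist x y < r -> U y.
Definition rel_closed {d} (M C : set d) : Prop :=
  (forall x, C x -> M x) /\
  forall x, M x -> (forall r, 0 < r -> exists y, C y /\ dist x y < r) -> C x.
Definition open_ball {d} (M U : set d) : Prop :=
  exists c r, M c /\ 0 < r /\ forall y, U y <-> (M y /\ dist c y < r).
Definition Ndelta {d} (M : set d) (delta : R) (A : set d) : set d :=
  fun x => M x /\ exists y, A y /\ dist x y < delta.

Inductive borel {d} : set d -> Prop :=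
| borel_open U : open_set U -> borel U
| borel_compl A : borel A -> borel (fun x => ~ A x)
| borel_union (A : nat -> set d) : (forall n, borel (A n)) -> borel (fun x => exists n, A n x)
| borel_ext A B : (forall x, A x <-> B x) -> borel A -> borel B.

Inductive ER := Fin (r : R) | PInf | MInf.
Definition ER_le (a b : ER) : Prop :=
  match a, b with
  | MInf, _ => True
  | _, PInf => True
  | Fin x, Fin y => x <= y
  | _, _ => False
  end.
Definition ER_lt (a b : ER) : Prop := ER_le a b /\ a <> b.
(** infimum in [-oo,+oo] (inf of the empty set is +oo) *)
Definition is_inf_ER (P : ER -> Prop) (m : ER) : Prop :=
  (forall v, P v -> ER_le m v) /\
  (forall m', (forall v, P v -> ER_le m' v) -> ER_le m' m).
Definition ER_negsub (m : ER) (eta : R) : ER :=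
  match m with Fin r => Fin (- r - eta) | PInf => MInf | MInf => PInf end.
Definition ER_negadd (m : ER) (eta : R) : ER :=
  match m with Fin r => Fin (- r + eta) | PInf => MInf | MInf => PInf end.
Definition epslog (eps p : R) : ER :=
  if Rlt_dec 0 p then Fin (eps * ln p) else MInf.

Definition is_glb_R (E : R -> Prop) (m : R) : Prop :=
  (forall v, E v -> m <= v) /\ (forall m', (forall v, E v -> m' <= v) -> m' <= m).

Definition setting {d} (M M0 M1 : set d) (F : Rd d -> Rd d) : Prop :=
  closed_set M /\
  (forall x, M x -> M (F x)) /\
  (forall x, M x -> forall e, 0 < e -> exists dl, 0 < dl /\
      forall y, M y -> dist x y < dl -> dist (F x) (F y) < e) /\
  (exists B, forall x, M x -> enorm (F x) <= B) /\
  (forall x, M x <-> (M0 x \/ M1 x)) /\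
  (forall x, M0 x -> M1 x -> False) /\
  rel_closed M M0 /\
  (forall x, M0 x -> M0 (F x)) /\
  (forall x, M1 x -> M1 (F x)).

(** p eps x A : transition kernel of X^eps; for each eps>0 and x in M,
    a probability measure on the Borel sets of M. *)
Definition markov_kernel {d} (M : set d) (p : R -> Rd d -> set d -> R) : Prop :=
  forall eps x, 0 < eps -> M x ->
    (forall A, p eps x A = p eps x (fun y => M y /\ A y)) /\
    (forall A B, (forall y, M y -> (A y <-> B y)) -> p eps x A = p eps x B) /\
    (forall A, borel A -> 0 <= p eps x A) /\
    p eps x M = 1 /\
    (forall A : nat -> set d, (forall n, borel (A n)) ->
       (forall n m y, n <> m -> A n y -> A m y -> ~ M y) ->
       infinite_sum (fun n => p eps x (A n)) (p eps x (fun y => exists n, A n y))).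

Definition is_beta {d} (M : set d) (F : Rd d -> Rd d) (p : R -> Rd d -> set d -> R)
  (delta eps b : R) : Prop :=
  is_lub (fun v => exists x, M x /\
            v = p eps x (fun y => M y /\ ~ Ndelta M delta (fun z => z = F x) y)) b.

Definition ER_cont_at {d} (M M1 : set d) (rho : Rd d -> Rd d -> ER) (x y : Rd d) : Prop :=
  match rho x y with
  | Fin v => forall e, 0 < e -> exists dl, 0 < dl /\ forall x' y', M1 x' -> M y' ->
       dist x x' < dl -> dist y y' < dl -> exists v', rho x' y' = Fin v' /\ Rabs (v' - v) < e
  | PInf => forall N, exists dl, 0 < dl /\ forall x' y', M1 x' -> M y' ->
       dist x x' < dl -> dist y y' < dl -> ER_lt (Fin N) (rho x' y')
  | MInf => forall N, exists dl, 0 < dl /\ forall x' y', M1 x' -> M y' ->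
       dist x x' < dl -> dist y y' < dl -> ER_lt (rho x' y') (Fin N)
  end.

Definition hyp_LD {d} (M M0 M1 : set d) (F : Rd d -> Rd d)
  (p : R -> Rd d -> set d -> R) (rho : Rd d -> Rd d -> ER) : Prop :=
  (forall x y, M x -> M y -> ER_le (Fin 0) (rho x y)) /\
  (forall x y, M1 x -> M y -> ER_cont_at M M1 rho x y) /\
  (forall x y, M x -> M y -> (rho x y = Fin 0 <-> y = F x)) /\
  (forall beta, 0 < beta -> forall m,
     is_inf_ER (fun v => exists x y, M x /\ M y /\ dmax (F x) y > beta /\ v = rho x y) m ->
     ER_lt (Fin 0) m) /\
  (forall K, compact K -> (forall x, K x -> M1 x) ->
   forall U, open_ball M U -> forall eta, 0 < eta ->
   exists eps0, 0 < eps0 /\ forall eps, 0 < eps < eps0 -> forall x, K x ->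
   forall m, is_inf_ER (fun v => exists y, U y /\ v = rho x y) m ->
   ER_le (ER_negsub m eta) (epslog eps (p eps x U))) /\
  (forall C, rel_closed M C -> forall eta, 0 < eta ->
   exists eps0, 0 < eps0 /\ forall eps, 0 < eps < eps0 -> forall x, M x ->
   forall m, is_inf_ER (fun v => exists y, C y /\ v = rho x y) m ->
   ER_le (epslog eps (p eps x C)) (ER_negadd m eta)).

Definition hyp_LD0 {d} (M M0 : set d) (p : R -> Rd d -> set d -> R) : Prop :=
  forall c, 0 < c -> exists V0, rel_open M V0 /\ (forall x, M0 x -> V0 x) /\
    forall a, a < - c -> exists eps0, 0 < eps0 /\ forall eps, 0 < eps < eps0 ->
      forall m, is_inf_ER (fun v => exists x, V0 x /\ v = epslog eps (p eps x M0)) m ->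
      ER_le (Fin a) m.

(* Main.v *)
Require Import Defs.
From Stdlib Require Import Reals.
From Stdlib Require Import Lra Psatz Classical List FunctionalExtensionality.
Import Defs.
Open Scope R_scope.

Lemma sumF_ext n (f g : Fin.t n -> R) : (forall i, f i = g i) -> sumF n f = sumF n g.
Proof. revert f g; induction n; simpl; intros f g H; auto. rewrite H; f_equal; apply IHn; auto. Qed.

Lemma sumF_add n (f g : Fin.t n -> R) : sumF n (fun i => f i + g i) = sumF n f + sumF n g.
Proof. revert f g; induction n; simpl; intros f g; [lra|]. rewrite IHn; lra. Qed.

Lemma sumF_scal n c (f : Fin.t n -> R) : sumF n (fun i => c * f i) = c * sumF n f.
Proof. revert f; induction n; simpl; intros f; [lra|]. rewrite IHn; lra. Qed.

Lemma sumF_nonneg n (f : Fin.t n -> R) : (forall i, 0 <= f i) -> 0 <= sumF n f.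
Proof. revert f; induction n; simpl; intros f H; [lra|]. specialize (IHn (fun i => f (Fin.FS i))).
 pose proof (H Fin.F1). assert (0 <= sumF n (fun i => f (Fin.FS i))) by (apply IHn; auto). lra. Qed.

Lemma sumF_ge n (f : Fin.t n -> R) : (forall i, 0 <= f i) -> forall i, f i <= sumF n f.
Proof. revert f; induction n; simpl; intros f H i. inversion i.
 apply (Fin.caseS' i (fun i => f i <= f Fin.F1 + sumF n (fun i0 => f (Fin.FS i0)))).
 - assert (0 <= sumF n (fun i => f (Fin.FS i))) by (apply sumF_nonneg; auto). lra.
 - intros j. pose proof (IHn (fun i => f (Fin.FS i)) (fun i => H _) j). pose proof (H Fin.F1). simpl in *. lra. Qed.

Lemma CS n (a b : Fin.t n -> R) :
  (sumF n (fun i => a i * b i))^2 <= sumF n (fun i => a i ^2) * sumF n (fun i => b i ^ 2).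
Proof. revert a b; induction n; cbn [sumF]; intros a b; [lra|].
 set (x := a Fin.F1). set (y := b Fin.F1).
 specialize (IHn (fun i => a (Fin.FS i)) (fun i => b (Fin.FS i))).
 set (B := sumF n (fun i => a (Fin.FS i) * b (Fin.FS i))) in *.
 set (A := sumF n (fun i => a (Fin.FS i) ^2)) in *.
 set (C := sumF n (fun i => b (Fin.FS i) ^2)) in *.
 assert (HA : 0 <= A) by (apply sumF_nonneg; intros; nra).
 assert (HC : 0 <= C) by (apply sumF_nonneg; intros; nra).
 assert (K: 2*x*y*B <= x*x*C + y*y*A).
 { destruct (Req_dec A 0) as [E|E].
   - assert (HB: B = 0) by (rewrite E in IHn; nra). rewrite HB, E. nra.
   - assert (A*(x*x*C + y*y*A - 2*x*y*B) >= 0).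
     { assert (A*(x*x*C + y*y*A - 2*x*y*B) = (y*A - x*B)^2 + x*x*(A*C - B^2)) by ring.
 assert (0 <= (y*A-x*B)^2) by apply pow2_ge_0. assert (0 <= x*x*(A*C-B^2)) by (apply Rmult_le_pos; nra). lra. }
 assert (0 < A) by lra.
     nra. }
 nra. Qed.

Definition vadd {d} (u v : Rd d) : Rd d := fun i => u i + v i.

Lemma enorm_sq {d} (u : Rd d) : enorm u ^ 2 = sumF d (fun i => u i ^ 2).
Proof. unfold enorm. rewrite <- Rsqr_pow2. apply Rsqr_sqrt. apply sumF_nonneg; intros; nra. Qed.

Lemma enorm_nonneg {d} (u : Rd d) : 0 <= enorm u.
Proof. apply sqrt_pos. Qed.

Lemma minkowski {d} (u v : Rd d) : enorm (vadd u v) <= enorm u + enorm v.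
Proof.
 pose proof (enorm_nonneg u); pose proof (enorm_nonneg v); pose proof (enorm_nonneg (vadd u v)).
 assert (enorm (vadd u v) ^2 <= (enorm u + enorm v)^2).
 { rewrite enorm_sq.
   replace (sumF d (fun i => vadd u v i ^ 2)) with
     (sumF d (fun i => u i ^2) + 2 * sumF d (fun i => u i * v i) + sumF d (fun i => v i ^2)).
   2:{ rewrite <- sumF_scal, <- !sumF_add. apply sumF_ext; intros; unfold vadd; ring. }
   pose proof (CS d u v). rewrite <- !enorm_sq in *.
   set (B := sumF d (fun i => u i * v i)) in *.
   assert (0 <= enorm u * enorm v) by nra.
   destruct (Rle_dec B (enorm u * enorm v)). nra. exfalso.
   assert ((B - enorm u * enorm v) * (B + enorm u * enorm v) > 0) by (apply Rmult_gt_0_compat; lra). nra. }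
 nra. Qed.

Lemma dist_tri {d} (a b c : Rd d) : dist a c <= dist a b + dist b c.
Proof. unfold dist. replace (enorm (fun i => a i - c i)) with
  (enorm (vadd (fun i => a i - b i) (fun i => b i - c i))). apply minkowski.
 unfold enorm, vadd. f_equal. apply sumF_ext; intros; ring. Qed.

Lemma dist_sym {d} (a b : Rd d) : dist a b = dist b a.
Proof. unfold dist, enorm. f_equal. apply sumF_ext; intros; ring. Qed.

Lemma dist_nonneg {d} (a b : Rd d) : 0 <= dist a b.
Proof. apply sqrt_pos. Qed.

Lemma maxF_prop n (f : Fin.t n -> R) : (forall i, 0 <= f i) ->
  0 <= maxF n f /\ (forall i, f i <= maxF n f) /\
  sumF n (fun i => f i ^ 2) <= INR n * maxF n f ^ 2.
Proof. revert f; induction n; cbn [sumF maxF]; intros f H.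
 - split; [lra|split]. intros i; inversion i. simpl; lra.
 - destruct (IHn (fun i => f (Fin.FS i)) (fun i => H _)) as [H1 [H2 H3]].
   set (mt := maxF n (fun i => f (Fin.FS i))) in *.
   pose proof (H Fin.F1). pose proof (Rmax_l (f Fin.F1) mt). pose proof (Rmax_r (f Fin.F1) mt).
   split; [lra|split].
   + intros i. apply (Fin.caseS' i (fun i => f i <= Rmax (f Fin.F1) mt)). lra.
     intros j. specialize (H2 j). lra.
   + rewrite S_INR. pose proof (pos_INR n).
     assert (mt^2 <= Rmax (f Fin.F1) mt ^2) by nra.
     assert (f Fin.F1 ^2 <= Rmax (f Fin.F1) mt ^2) by nra.
     destruct n; simpl in *; nra. Qed.

Lemma abs_sq a : Rabs a ^ 2 = a ^ 2.
Proof. unfold Rabs; destruct (Rcase_abs a); ring. Qed.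

Lemma dist_dmax {d} (x y : Rd d) : dist x y ^ 2 <= INR d * dmax x y ^ 2.
Proof. unfold dist. rewrite enorm_sq. unfold dmax.
 destruct (maxF_prop d (fun i => Rabs (x i - y i))) as [_ [_ H]]. intros; apply Rabs_pos.
 eapply Rle_trans; [|apply H]. right. apply sumF_ext; intros. rewrite abs_sq. reflexivity. Qed.

Lemma maxF_le n (f : Fin.t n -> R) h : 0 <= h -> (forall i, f i <= h) -> maxF n f <= h.
Proof. revert f; induction n; cbn [maxF]; intros f Hh H; auto.
 apply Rmax_lub; auto. Qed.

Lemma dmax_le {d} (x y : Rd d) h : 0 <= h -> (forall i, Rabs (x i - y i) <= h) -> dmax x y <= h.
Proof. intros; apply maxF_le; auto. Qed.

Lemma dmax_nonneg {d} (x y : Rd d) : 0 <= dmax x y.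
Proof. unfold dmax. apply (maxF_prop d (fun i => Rabs (x i - y i))). intros; apply Rabs_pos. Qed.

Lemma coord_le {d} (u : Rd d) i : Rabs (u i) <= enorm u.
Proof. pose proof (enorm_nonneg u). pose proof (Rabs_pos (u i)).
 assert (Rabs (u i) ^2 <= enorm u ^2).
 { rewrite enorm_sq, abs_sq. apply (sumF_ge d (fun i => u i ^2)).
   intros; nra. }
 nra. Qed.

Lemma ER_inf_exists (P : ER -> Prop) : exists m, is_inf_ER P m.
Proof.
 destruct (classic (P MInf)) as [HM|HM].
 { exists MInf; split; [intros v _; exact I|]. intros m' H. apply H; auto. }
 destruct (classic (exists r, P (Fin r))) as [[r0 Hr0]|HF].
 - destruct (classic (exists lb, forall r, P (Fin r) -> lb <= r)) as [[lb Hlb]|HB].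
   + destruct (completeness (fun x => P (Fin (- x)))) as [u [Hu1 Hu2]].
     { exists (- lb). intros x Hx. specialize (Hlb _ Hx). lra. }
     { exists (- r0). rewrite Ropp_involutive; auto. }
     exists (Fin (- u)). split.
     * intros v Hv. destruct v; simpl; auto. assert (Hx: P (Fin (- - r))) by (rewrite Ropp_involutive; auto).
       specialize (Hu1 _ Hx). lra.
     * intros m' H. destruct m'; simpl; auto.
       -- assert (u <= - r). { apply Hu2. intros x Hx. specialize (H _ Hx). simpl in H. lra. } lra.
       -- specialize (H _ Hr0). simpl in H. contradiction.
   + exists MInf. split; [intros; exact I|]. intros m' H. destruct m'; simpl; auto.
     * apply HB. exists r. intros r' Hr'. apply (H _ Hr').
     * specialize (H _ Hr0). simpl in H. contradiction.
 - exists PInf. split.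
   + intros v Hv. destruct v; simpl; auto. exfalso; apply HF; eauto.
   + intros m' _. destruct m'; simpl; auto.
Qed.

Lemma ER_le_trans a b c : ER_le a b -> ER_le b c -> ER_le a c.
Proof. destruct a, b, c; simpl; intros; auto; try lra; contradiction. Qed.

Lemma exp_le_mono x y : x <= y -> exp x <= exp y.
Proof. intros [H|H]; [left; apply exp_increasing; auto|subst; lra]. Qed.

Lemma epslog_upper eps q r : 0 < eps -> ER_le (epslog eps q) (Fin r) -> q <= exp (r / eps).
Proof. intros He. unfold epslog. destruct (Rlt_dec 0 q); simpl; intros H.
 - rewrite <- (exp_ln q) by auto. apply exp_le_mono.
   apply Rmult_le_reg_l with eps; auto. field_simplify; lra.
 - pose proof (exp_pos (r/eps)). lra. Qed.

Lemma epslog_lower eps q r : 0 < eps -> ER_le (Fin r) (epslog eps q) -> exp (r / eps) <= q /\ 0 < q.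
Proof. intros He. unfold epslog. destruct (Rlt_dec 0 q); simpl; intros H; [|contradiction].
 split; auto. rewrite <- (exp_ln q) by auto. apply exp_le_mono.
 apply Rmult_le_reg_l with eps; auto. field_simplify; lra. Qed.

Lemma borel_closed {d} (C : set d) : closed_set C -> borel C.
Proof. intros HC. apply borel_ext with (fun x => ~ ~ C x). intros; split; [apply NNPP|tauto].
 apply borel_compl, borel_open. intros x Hx.
 destruct (classic (exists r, 0 < r /\ forall y, C y -> r <= dist x y)) as [[r [Hr H]]|H].
 - exists r; split; auto. intros y Hy Cy. specialize (H _ Cy). lra.
 - exfalso. apply Hx, HC. intros r Hr. apply NNPP; intros H'. apply H. exists r; split; auto.
   intros y Cy. apply Rnot_lt_le. intros Hl. apply H'. eauto. Qed.

Lemma borel_or {d} (A B : set d) : borel A -> borel B -> borel (fun y => A y \/ B y).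
Proof. intros HA HB. apply borel_ext with (fun y => exists n, (match n with O => A | _ => B end) y).
 intros y; split. intros [[|n] H]; auto. intros [H|H]; [exists O|exists 1%nat]; auto.
 apply borel_union. intros [|n]; auto. Qed.

Lemma borel_and {d} (A B : set d) : borel A -> borel B -> borel (fun y => A y /\ B y).
Proof. intros HA HB. apply borel_ext with (fun y => ~ ((~ A y) \/ (~ B y))).
 intros y; split. intros H. split; apply NNPP; tauto. tauto.
 apply borel_compl, borel_or; apply borel_compl; auto. Qed.

Lemma borel_empty {d} : borel (fun _ : Rd d => False).
Proof. apply borel_open. intros x []. Qed.


Lemma const_sum_zero c l : infinite_sum (fun _ => c) l -> c = 0.
Proof. intros H. destruct (Req_dec c 0); auto. exfalso.
 destruct (H (Rabs c / 4)) as [N HN]. pose proof (Rabs_pos_lt c H0). lra.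
 assert (E: forall n, sum_f_R0 (fun _ => c) (S n) = sum_f_R0 (fun _ => c) n + c) by (intros; simpl; auto).
 pose proof (HN N (le_n _)). pose proof (HN (S N) (le_S _ _ (le_n _))). rewrite E in H2.
 unfold R_dist in *. pose proof (Rabs_pos_lt c H0).
 set (s := sum_f_R0 (fun _ => c) N) in *.
 assert (Rabs c <= Rabs (s + c - l) + Rabs (s - l)).
 { replace c with ((s + c - l) + - (s - l)) at 1 by ring. eapply Rle_trans; [apply Rabs_triang|]. rewrite Rabs_Ropp; lra. }
 lra. Qed.

Lemma p_empty (d : nat) (M : set d) (p : R -> Rd d -> set d -> R) (HK : markov_kernel M p) eps x : 0 < eps -> M x -> p eps x (fun _ => False) = 0.
Proof. intros He Mx. destruct (HK eps x He Mx) as [_ [Hext [_ [_ Hadd]]]].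
 pose proof (Hadd (fun _ _ => False) (fun _ => borel_empty) (fun _ _ _ _ H _ => match H with end)).
 apply (const_sum_zero _ _ H). Qed.

Lemma p_nonneg (d : nat) (M : set d) (p : R -> Rd d -> set d -> R) (HK : markov_kernel M p) eps x A : 0 < eps -> M x -> borel A -> 0 <= p eps x A.
Proof. intros He Mx HA. destruct (HK eps x He Mx) as [_ [_ [H _]]]. auto. Qed.

Lemma p_mono (d : nat) (M : set d) (p : R -> Rd d -> set d -> R) (HK : markov_kernel M p) eps x A B : 0 < eps -> M x -> borel A -> borel B ->
  (forall y, M y -> A y -> B y) -> p eps x A <= p eps x B.
Proof. intros He Mx HA HB Hsub.
 destruct (HK eps x He Mx) as [_ [Hext [Hpos [_ Hadd]]]].
 set (D := fun n : nat => match n with O => A | 1%nat => (fun y => B y /\ ~ A y) | _ => (fun _ => False) end).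
 assert (HD: forall n, borel (D n)).
 { intros [|[|n]]; simpl; auto. apply borel_and; auto. apply borel_compl; auto. apply borel_empty. }
 assert (Hdis: forall n m y, n <> m -> D n y -> D m y -> ~ M y).
 { intros [|[|n]] [|[|m]] y Hnm; simpl; try tauto; try lia. }
 specialize (Hadd D HD Hdis).
 assert (Hu: p eps x (fun y => exists n, D n y) = p eps x B).
 { apply Hext. intros y My; split.
   - intros [[|[|n]] H]; simpl in H; try tauto. auto.
   - intros HBy. destruct (classic (A y)); [exists O|exists 1%nat]; simpl; auto. }
 rewrite Hu in Hadd.
 assert (Hcv: Un_cv (sum_f_R0 (fun n => p eps x (D n))) (p eps x A + p eps x (fun y => B y /\ ~ A y))).
 { intros e He'. exists 1%nat. intros n Hn.
   assert (sum_f_R0 (fun n => p eps x (D n)) n = p eps x A + p eps x (fun y => B y /\ ~ A y)).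
   { destruct n; [lia|]. clear Hn. induction n. simpl; auto.
     simpl sum_f_R0 at 1. simpl in IHn. rewrite IHn. simpl D. rewrite (p_empty d M p HK); auto. ring. }
   rewrite H. unfold R_dist. rewrite Rminus_eq_0, Rabs_R0; auto. }
 pose proof (UL_sequence _ _ _ Hadd Hcv).
 assert (0 <= p eps x (fun y => B y /\ ~ A y)). apply Hpos. apply borel_and; auto. apply borel_compl; auto.
 lra. Qed.

Lemma grid1_aux h (N : nat) s : 0 < h -> 0 <= s <= INR N * h ->
  exists k, (k <= N)%nat /\ Rabs (s - INR k * h) <= h.
Proof. intros Hh; induction N; intros Hs.
 - exists O; split; auto. simpl in *. rewrite Rmult_0_l in *. rewrite Rminus_0_r, Rabs_right; lra.
 - destruct (Rle_dec s (INR N * h)).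
   + destruct IHN as [k [Hk H]]; [lra|]. exists k; split; auto.
   + exists (S N); split; auto. rewrite S_INR in *. rewrite Rabs_left1; lra.
Qed.

Lemma grid1 Rb h : 0 < h -> exists L : list R, forall t, Rabs t <= Rb ->
  exists s, In s L /\ Rabs (t - s) <= h.
Proof. intros Hh. destruct (INR_archimed h (2 * Rb) Hh) as [N HN].
 exists (map (fun k => - Rb + INR k * h) (seq 0 (S N))). intros t Ht.
 assert (-Rb <= t <= Rb) by (unfold Rabs in Ht; destruct (Rcase_abs t); lra).
 destruct (grid1_aux h N (t + Rb)) as [k [Hk Hkk]]; [lra|lra|].
 exists (- Rb + INR k * h); split.
 - apply in_map_iff; exists k; split; [reflexivity|apply in_seq; lia].
 - replace (t - (- Rb + INR k * h)) with (t + Rb - INR k * h) by ring; auto.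

Qed.

Definition vcons {d} (t : R) (g : Rd d) : Rd (S d) :=
  fun i => Fin.caseS' i (fun _ => R) t g.

Lemma grid {d} Rb h : 0 < h -> exists L : list (Rd d), forall x : Rd d,
  (forall i, Rabs (x i) <= Rb) -> exists g, In g L /\ forall i, Rabs (x i - g i) <= h.
Proof. intros Hh. induction d.
 - exists ((fun _ => 0) :: nil). intros x _. exists (fun _ => 0). split; [left; auto|]. intros i; inversion i.
 - destruct IHd as [L HL]. destruct (grid1 Rb h Hh) as [L1 HL1].
   exists (flat_map (fun t => map (fun g => vcons t g) L) L1).
   intros x Hx. destruct (HL1 (x Fin.F1) (Hx _)) as [s [Hs1 Hs2]].
   destruct (HL (fun i => x (Fin.FS i)) (fun i => Hx _)) as [g [Hg1 Hg2]].
   exists (vcons s g). split.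
   + apply in_flat_map. exists s; split; auto. apply in_map; auto.
   + intros i. apply (Fin.caseS' i (fun i => Rabs (x i - vcons s g i) <= h)); simpl; auto.
Qed.

Lemma uniform_list {A} (P : A -> R -> Prop) (L : list A) :
  (forall a e e', P a e -> 0 < e' <= e -> P a e') ->
  (forall a, In a L -> exists e, 0 < e /\ P a e) ->
  exists e, 0 < e /\ forall a, In a L -> P a e.
Proof. intros Hmono. induction L; intros H.
 - exists 1; split; [lra|]. intros a [].
 - destruct (H a (or_introl eq_refl)) as [e1 [He1 P1]].
   destruct IHL as [e2 [He2 P2]]. intros; apply H; right; auto.
   exists (Rmin e1 e2). split. apply Rmin_pos; auto.
   intros b [<-|Hb].
   + apply Hmono with e1; auto. split. apply Rmin_pos; auto. apply Rmin_l.
   + apply Hmono with e2; auto. split. apply Rmin_pos; auto. apply Rmin_r.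
Qed.

Lemma small_dist {d} (u v : Rd d) delta : 0 < delta ->
  dmax u v <= delta / (8 * (INR d + 1)) -> dist u v < delta / 4.
Proof. intros Hd Hm. pose proof (dist_dmax u v). pose proof (dmax_nonneg u v).
 pose proof (dist_nonneg u v). pose proof (pos_INR d).
 set (k := INR d + 1) in *. set (be := delta / (8 * k)) in *.
 assert (Hk: 1 <= k) by (unfold k; lra).
 assert (Hbe: 8 * k * be = delta) by (unfold be; field; lra).
 assert (0 <= be) by lra.
 assert (dmax u v ^2 <= be ^2) by nra.
 assert (dist u v ^ 2 <= k * be ^ 2).
 { eapply Rle_trans; [apply H|]. assert (INR d <= k) by (unfold k; lra).
   assert (0 <= dmax u v ^2) by nra. nra. }
 assert (k * be^2 <= k * k * be ^2) by nra.
 assert (dist u v ^2 < (delta/4)^2).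
 { rewrite <- Hbe. nra. }
 nra. Qed.

Lemma ball_open {d} (c : Rd d) r : open_set (fun y => dist c y < r).
Proof. intros x Hx. exists (r - dist c x). split; [lra|]. intros y Hy.
 pose proof (dist_tri c x y). lra. Qed.

Lemma negadd_mono k m eta : ER_le (Fin k) m -> ER_le (ER_negadd m eta) (Fin (- k + eta)).
Proof. destruct m; simpl; auto; intros; lra. Qed.

Theorem mainTheorem10 (d : nat) (M M0 M1 : set d) (F : Rd d -> Rd d)
  (p : R -> Rd d -> set d -> R) (rho : Rd d -> Rd d -> ER) :
  setting M M0 M1 F ->
  markov_kernel M p ->
  (forall eps x, 0 < eps -> M0 x -> p eps x M1 = 0) ->
  hyp_LD M M0 M1 F p rho ->
  hyp_LD0 M M0 p ->
  forall delta0, 0 < delta0 ->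
  exists V0, rel_open M V0 /\ (forall x, M0 x -> V0 x) /\
    forall e, 0 < e -> exists eps0, 0 < eps0 /\ forall eps, 0 < eps < eps0 ->
      forall b I, is_beta M F p delta0 eps b ->
        is_glb_R (fun v => exists x, V0 x /\ v = p eps x M0) I ->
        0 < I /\ Rabs (b / I) < e.
Proof.
 intros Hset HK _ HLD HLD0 delta0 Hd0.
 destruct Hset as [HMcl [HMF [HFc [[B HB] _]]]].
 destruct HLD as [_ [_ [_ [Hiii [_ Hv]]]]].
 set (beta := delta0 / (8 * (INR d + 1))).
 assert (Hbeta : 0 < beta). { unfold beta. pose proof (pos_INR d). apply Rdiv_lt_0_compat; lra. }
 destruct (ER_inf_exists (fun v => exists x y, M x /\ M y /\ dmax (F x) y > beta /\ v = rho x y)) as [m0 Hm0].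
 pose proof (Hiii beta Hbeta m0 Hm0) as Hlt.
 assert (Hkap: exists kap, 0 < kap /\ ER_le (Fin kap) m0).
 { destruct m0 as [r| |].
   - exists r. destruct Hlt as [H1 H2]. simpl in H1. split; simpl; [|lra].
     destruct H1; auto. subst; contradiction.
   - exists 1; simpl; split; auto; lra.
   - destruct Hlt as [[] _]. }
 destruct Hkap as [kap [Hkap Hkm0]].
 destruct (HLD0 (kap/4) ltac:(lra)) as [V0 [HV0o [HV0M0 HV0]]].
 destruct (HV0 (- (kap/2)) ltac:(lra)) as [eps1 [Heps1 Hlow]].
 exists V0. split; [auto|split; [auto|]]. intros e He.
 destruct (grid (d:=d) B beta Hbeta) as [L HL].
 set (Cg := fun (g : Rd d) => fun y => M y /\ ~ (dist g y < delta0 / 2)).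
 assert (HCcl : forall g, rel_closed M (Cg g)).
 { intros g. split; [intros x [H _]; auto|]. intros x Mx H. split; auto. intros Hl.
   destruct (H (delta0/2 - dist g x)) as [y [[My Hy] Hxy]]; [lra|]. apply Hy.
   pose proof (dist_tri g x y). lra. }
 destruct (uniform_list (fun g e0 => forall eps, 0 < eps < e0 -> forall x, M x ->
     forall m, is_inf_ER (fun v => exists y, Cg g y /\ v = rho x y) m ->
     ER_le (epslog eps (p eps x (Cg g))) (ER_negadd m (kap/4))) L) as [eps2 [Heps2 Hup2]].
 { intros a e0 e' H [H1 H2] eps Heps. apply H. lra. }
 { intros g _. apply (Hv (Cg g) (HCcl g) (kap/4) ltac:(lra)). }
 assert (Hc3 : 0 < kap / (4 * (Rabs (ln e) + 1))).
 { pose proof (Rabs_pos (ln e)). apply Rdiv_lt_0_compat; lra. }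
 exists (Rmin eps1 (Rmin eps2 (kap / (4 * (Rabs (ln e) + 1))))). split.
 { repeat apply Rmin_pos; auto. }
 intros eps Heps b I Hb HI.
 pose proof (Rmin_l eps1 (Rmin eps2 (kap / (4 * (Rabs (ln e) + 1))))).
 pose proof (Rmin_r eps1 (Rmin eps2 (kap / (4 * (Rabs (ln e) + 1))))).
 pose proof (Rmin_l eps2 (kap / (4 * (Rabs (ln e) + 1)))).
 pose proof (Rmin_r eps2 (kap / (4 * (Rabs (ln e) + 1)))).
 assert (He1 : eps < eps1) by lra. assert (He2 : eps < eps2) by lra.
 assert (He3 : eps < kap / (4 * (Rabs (ln e) + 1))) by lra.
 clear H H0 H1 H2.
 destruct Heps as [Heps _].
 assert (Hlow' : forall x, V0 x -> exp (- (kap/2) / eps) <= p eps x M0).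
 { intros x Vx. destruct (ER_inf_exists (fun v => exists x, V0 x /\ v = epslog eps (p eps x M0))) as [m Hm].
   pose proof (Hlow eps (conj Heps He1) m Hm) as H1.
   assert (H2 : ER_le m (epslog eps (p eps x M0))) by (apply (proj1 Hm); eauto).
   apply (epslog_lower eps _ _ Heps (ER_le_trans _ _ _ H1 H2)). }
 destruct HI as [HI1 HI2].
 assert (HIlow : exp (- (kap/2) / eps) <= I).
 { apply HI2. intros v [x [Vx ->]]. auto. }
 pose proof (exp_pos (- (kap/2) / eps)) as Hexp.
 assert (HIpos : 0 < I) by lra. split; auto.
 destruct (classic (exists x, V0 x)) as [[x0 Vx0]|Hne].
 2:{ exfalso. assert (I + 1 <= I). apply HI2. intros v [x [Vx _]]. exfalso; eauto. lra. }
 assert (HMV : forall x, V0 x -> M x) by (apply (proj1 HV0o)).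
 set (Ax := fun x => fun y => M y /\ ~ Ndelta M delta0 (fun z => z = F x) y).
 assert (HMb : borel M) by (apply borel_closed; auto).
 assert (HAb : forall x, borel (Ax x)).
 { intros x. apply borel_ext with (fun y => M y /\ ~ (dist (F x) y < delta0)).
   - intros y; unfold Ax, Ndelta; split.
     + intros [My Hn]; split; auto. intros [_ [z [-> Hz]]]. apply Hn. rewrite dist_sym; auto.
     + intros [My Hn]; split; auto. intros Hl. apply Hn. split; auto. exists (F x); split; auto. rewrite dist_sym; auto.
   - apply borel_and; auto. apply borel_compl, borel_open, ball_open. }
 assert (HCb : forall g, borel (Cg g)).
 { intros g. apply borel_and; auto. apply borel_compl, borel_open, ball_open. }
 set (U := (- kap + kap / 4) / eps).
 assert (Hup : forall x, M x -> p eps x (Ax x) <= exp U).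
 { intros x Mx.
   destruct (HL (F x)) as [g [Hg Hgi]].
   { intros i. pose proof (coord_le (F x) i). pose proof (HB x Mx). lra. }
   assert (Hdg : dist (F x) g < delta0 / 4).
   { apply small_dist; auto. apply dmax_le; [left; exact Hbeta|exact Hgi]. }
   eapply Rle_trans.
   { apply (p_mono d M p HK eps x (Ax x) (Cg g) Heps Mx (HAb x) (HCb g)).
     intros y My [_ Hn]. split; auto. intros Hl. apply Hn. split; auto. exists (F x); split; auto.
     pose proof (dist_tri y g (F x)). rewrite (dist_sym y g) in H. rewrite (dist_sym g (F x)) in H. lra. }
   destruct (ER_inf_exists (fun v => exists y, Cg g y /\ v = rho x y)) as [mx Hmx].
   pose proof (Hup2 g Hg eps (conj Heps He2) x Mx mx Hmx) as H1.
   assert (H2 : ER_le m0 mx).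
   { apply (proj2 Hmx). intros v [y [[My Hy] ->]]. apply (proj1 Hm0).
     exists x, y. split; auto. split; auto. split; auto.
     apply Rnot_le_gt. intros Hle. pose proof (small_dist (F x) y delta0 Hd0 Hle).
     pose proof (dist_tri g (F x) y). rewrite (dist_sym g (F x)) in H0. apply Hy. lra. }
   pose proof (negadd_mono kap mx (kap/4) (ER_le_trans _ _ _ Hkm0 H2)) as H3.
   apply (epslog_upper eps _ _ Heps (ER_le_trans _ _ _ H1 H3)). }
 destruct Hb as [Hb1 Hb2].
 assert (Hbup : b <= exp U).
 { apply Hb2. intros v [x [Mx ->]]. auto. }
 assert (Hb0 : 0 <= b).
 { pose proof (Hb1 (p eps x0 (Ax x0)) (ex_intro _ x0 (conj (HMV x0 Vx0) eq_refl))).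
   pose proof (p_nonneg d M p HK eps x0 (Ax x0) Heps (HMV x0 Vx0) (HAb x0)). lra. }
 assert (Hkey : exp U < e * exp (- (kap/2) / eps)).
 { replace U with ((- (kap/4)/eps) + (- (kap/2) / eps)) by (unfold U; field; lra).
   rewrite exp_plus. apply Rmult_lt_compat_r; auto.
   rewrite <- (exp_ln e) by auto. apply exp_increasing.
   pose proof (Rabs_pos (ln e)). pose proof (Rle_abs (- ln e)). rewrite Rabs_Ropp in H0.
   assert (eps * (4 * (Rabs (ln e) + 1)) < kap).
   { apply Rmult_lt_reg_r with (/ (4 * (Rabs (ln e) + 1))). apply Rinv_0_lt_compat; lra.
     rewrite Rmult_assoc, Rinv_r, Rmult_1_r by lra. auto. }
   apply Rmult_lt_reg_l with eps; auto. replace (eps * (- (kap / 4) / eps)) with (- (kap/4)) by (field; lra).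
   nra. }
 rewrite Rabs_right.
 2:{ apply Rle_ge. unfold Rdiv. apply Rmult_le_pos; auto. left; apply Rinv_0_lt_compat; auto. }
 apply Rmult_lt_reg_r with I; auto. unfold Rdiv. rewrite Rmult_assoc, Rinv_l, Rmult_1_r by lra.
 nra.
Qed.
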